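(* Let $t \ge 1$ and let $A \subseteq \mathbb{Z}^2$ be a set of $t$ cells, where a cell $(x,y)$ denotes row $x$ (rows numbered increasing downwards) and column $y$ (columns numbered increasing rightwards). Suppose the following two conditions hold. (First flood.) There exist pairwise distinct cells $c_1,\dots,c_t$ with $A=\{c_1,\dots,c_t\}$, and integers $s_1,\dots,s_{t-1}\in\{0,1\}$ such that, setting $r_0=0$ and $r_j=r_{j-1}+s_j$, we have $r_j\in\{0,1\}$ for all $1\le j\le t-1$, and for every $1\le j\le t-1$ there is an index $\ell\le j$ with $$c_{j+1}=\begin{cases} c_\ell+(1,0) & \text{if } r_j=0 \text{ (the cell directly below } c_\ell),\\ c_\ell+(0,1) & \text{if } r_j=1 \text{ (the cell directly to the right of } c_\ell).\end{cases}$$ (Second flood.) There exist pairwise distinct cells $d_1,\dots,d_t$ with $A=\{d_1,\dots,d_t\}$, and integers $s'_1,\dots,s'_{t-1}\in\{0,1\}$ such that, setting $r'_0=0$ and $r'_j=r'_{j-1}+s'_j$, we have $r'_j\in\{0,1\}$ for all $1\le j\le t-1$, and for every $1\le j\le t-1$ there is an index $\ell\le j$ with $$d_{j+1}=\begin{cases} d_\ell+(-1,0) & \text{if } r'_j=0 \text{ (the cell directly above } d_\ell),\\ d_\ell+(0,-1) & \text{if } r'_j=1 \text{ (the cell directly to the left of } d_\ell).\end{cases}$$ Then $A$ is a rectangle: there are integers $a\le a'$ and $b\le b'$ with $A=\{a,\dots,a'\}\times\{b,\dots,b'\}$ and $(a'-a+1)(b'-b+1)=t$; moreover $c_1=(a,b)$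 is its top-left corner and $d_1=(a',b')$ is its bottom-right corner.
   Context: This is the combinatorial core of the soundness of a card-based zero-knowledge protocol for the Shikaku puzzle (partition an $m\times n$ grid into rectangles, each containing exactly one given number equal to its area). In the protocol, a prover marks a region by a ''first flood'' starting from one cell and repeatedly marking a new, previously unmarked cell adjacent to an already marked one, moving only downwards while a secret direction bit $r$ equals $0$ and only rightwards once $r=1$ (where $r$ is updated by secretly adding $s\in\{0,1\}$ and publicly checking $r\ne 2$), followed by a ''second flood'' over exactly the same set of cells starting from one cell and moving only upwards while $r=0$ and only leftwards once $r=1$. The hypotheses above formalize these two floods. *)

(* Defs.v *)
(* cells are pairs of integers (row, column). *)
From Stdlib Require Import ZArith Lia.
Open Scope Z_scope.

Definition cell := (Z * Z)%type.

Fixpoint racc (s : nat -> Z) (j : nat) : Z :=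
  match j with
  | O => 0
  | S k => racc s k + s (S k)
  end.

Definition cadd (p q : cell) : cell := (fst p + fst q, snd p + snd q).

Definition flood (t : nat) (A : cell -> Prop) (c : nat -> cell) (s : nat -> Z)
    (v0 v1 : cell) : Prop :=
  (forall i j, (1 <= i <= t)%nat -> (1 <= j <= t)%nat -> c i = c j -> i = j) /\
  (forall p, A p <-> exists i, (1 <= i <= t)%nat /\ c i = p) /\
  (forall j, (1 <= j <= t - 1)%nat -> s j = 0 \/ s j = 1) /\
  (forall j, (1 <= j <= t - 1)%nat -> racc s j = 0 \/ racc s j = 1) /\
  (forall j, (1 <= j <= t - 1)%nat ->
     exists l, (1 <= l <= j)%nat /\
       (racc s j = 0 -> c (S j) = cadd (c l) v0) /\
       (racc s j = 1 -> c (S j) = cadd (c l) v1)).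

(* Main.v *)
Require Import Defs.
From Stdlib Require Import ZArith Lia List.
Open Scope Z_scope.

Lemma racc_mono (t : nat) (s : nat -> Z) (j : nat) :
  (forall j, (1 <= j <= t - 1)%nat -> s j = 0 \/ s j = 1) ->
  (forall j, (1 <= j <= t - 1)%nat -> racc s j = 0 \/ racc s j = 1) ->
  (1 <= j <= t - 1)%nat -> racc s j = 0 -> racc s (j - 1) = 0.
Proof.
  intros Hs Hr Hj H0.
  destruct j as [|j]; [lia|].
  replace (S j - 1)%nat with j by lia.
  simpl in H0.
  assert (racc s j = 0 \/ racc s j = 1).
  { destruct j as [|j']; [left; reflexivity|]. apply Hr; lia. }
  specialize (Hs (S j) Hj). lia.
Qed.

Definition Q (c : nat -> cell) (s : nat -> Z) (x1 y1 : Z) (j : nat) :=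
  forall i, (1 <= i <= j)%nat ->
    x1 <= fst (c i) /\ y1 <= snd (c i) /\
    (snd (c i) > y1 -> exists k, (1 <= k <= j)%nat /\ c k = (fst (c i), snd (c i) - 1)) /\
    (snd (c i) = y1 -> fst (c i) > x1 -> exists k, (1 <= k <= j)%nat /\ c k = (fst (c i) - 1, y1)) /\
    (racc s (j - 1) = 0 -> snd (c i) = y1).

Lemma Q_all t A c s x1 y1 :
  flood t A c s (1, 0) (0, 1) -> c 1%nat = (x1, y1) ->
  forall j, (1 <= j <= t)%nat -> Q c s x1 y1 j.
Proof.
  intros [Hinj [Hmem [Hs [Hr Hstep]]]] Hc1.
  induction j as [|j IH]; intros Hj; [lia|].
  destruct j as [|j].
  - intros i Hi. replace i with 1%nat by lia. rewrite Hc1. simpl.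
    repeat split; try lia; intros; lia.
  - specialize (IH ltac:(lia)).
    assert (Hj' : (1 <= S j <= t - 1)%nat) by lia.
    destruct (Hstep (S j) Hj') as [l [Hl [H0 H1]]].
    pose proof (racc_mono t s (S j) Hs Hr Hj') as Hmono.
    unfold Q; replace (S (S j) - 1)%nat with (S j) by lia.
    destruct (IH l Hl) as [Lx [Ly [_ [_ Lr]]]].
    destruct (c l) as [xl yl] eqn:Ecl. simpl in Lx, Ly, Lr.
    intros i Hi.
    destruct (Nat.eq_dec i (S (S j))) as [->|Hne].
    + destruct (Hr (S j) Hj') as [R|R].
      * rewrite (H0 R). unfold cadd; cbn [fst snd].
        specialize (Lr (Hmono R)).
        refine (conj _ (conj _ (conj _ (conj _ _)))).
        -- lia.
        -- lia.
        -- intros; lia.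
        -- intros _ _. exists l. split; [lia|]. rewrite Ecl. f_equal; lia.
        -- intros; lia.
      * rewrite (H1 R). unfold cadd; cbn [fst snd].
        refine (conj _ (conj _ (conj _ (conj _ _)))).
        -- lia.
        -- lia.
        -- intros _. exists l. split; [lia|]. rewrite Ecl. f_equal; lia.
        -- intros; lia.
        -- intros; lia.
    + destruct (IH i ltac:(lia)) as [A1 [A2 [A3 [A4 A5]]]].
      refine (conj A1 (conj A2 (conj _ (conj _ _)))).
      * intros H. destruct (A3 H) as [k [Hk Ek]]. exists k. split; [lia|exact Ek].
      * intros H H'. destruct (A4 H H') as [k [Hk Ek]]. exists k. split; [lia|exact Ek].
      * intros R. apply A5. rewrite Nat.sub_1_r. simpl.
        replace (j - 0)%nat with j by lia.
        replace j with (S j - 1)%nat by lia. apply Hmono. exact R.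
Qed.

Lemma props t A c s x1 y1 :
  (1 <= t)%nat -> flood t A c s (1, 0) (0, 1) -> c 1%nat = (x1, y1) ->
  (forall p, A p -> x1 <= fst p /\ y1 <= snd p) /\
  (forall x y, A (x, y) -> y > y1 -> A (x, y - 1)) /\
  (forall x, A (x, y1) -> x > x1 -> A (x - 1, y1)).
Proof.
  intros Ht Hf Hc1.
  pose proof (Q_all t A c s x1 y1 Hf Hc1 t ltac:(lia)) as HQ.
  destruct Hf as [_ [Hmem _]].
  split; [|split].
  - intros p Hp. apply Hmem in Hp. destruct Hp as [i [Hi <-]].
    destruct (HQ i Hi) as [? [? _]]. auto.
  - intros x y Hp Hy. apply Hmem in Hp. destruct Hp as [i [Hi Ei]].
    destruct (HQ i Hi) as [_ [_ [H3 _]]]. rewrite Ei in H3. cbn [fst snd] in H3.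
    destruct (H3 Hy) as [k [Hk Ek]]. apply Hmem. exists k. auto.
  - intros x Hp Hx. apply Hmem in Hp. destruct Hp as [i [Hi Ei]].
    destruct (HQ i Hi) as [_ [_ [_ [H4 _]]]]. rewrite Ei in H4. cbn [fst snd] in H4.
    destruct (H4 eq_refl Hx) as [k [Hk Ek]]. apply Hmem. exists k. auto.
Qed.

Definition neg (p : cell) : cell := (- fst p, - snd p).

Lemma neg_neg p : neg (neg p) = p.
Proof. destruct p; unfold neg; simpl; f_equal; lia. Qed.

Lemma flood_neg t A d s :
  flood t A d s (-1, 0) (0, -1) ->
  flood t (fun p => A (neg p)) (fun i => neg (d i)) s (1, 0) (0, 1).
Proof.
  intros [Hinj [Hmem [Hs [Hr Hstep]]]].
  refine (conj _ (conj _ (conj Hs (conj Hr _)))).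
  - intros i j Hi Hj E. apply Hinj; auto.
    rewrite <- (neg_neg (d i)), <- (neg_neg (d j)), E. reflexivity.
  - intros p. rewrite Hmem. split; intros [i [Hi Ei]]; exists i; split; auto.
    + rewrite Ei, neg_neg. reflexivity.
    + rewrite <- Ei, neg_neg. reflexivity.
  - intros j Hj. destruct (Hstep j Hj) as [l [Hl [H0 H1]]].
    exists l. split; [exact Hl|]. split; intros R.
    + rewrite (H0 R). destruct (d l). unfold cadd, neg; simpl; f_equal; lia.
    + rewrite (H1 R). destruct (d l). unfold cadd, neg; simpl; f_equal; lia.
Qed.

Definition zrange (a : Z) (n : nat) : list Z := map (fun i => a + Z.of_nat i) (seq 0 n).

Lemma zrange_nodup a n : NoDup (zrange a n).
Proof.
  unfold zrange. apply NoDup_map_NoDup_ForallPairs; [|apply seq_NoDup].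
  intros x y _ _ E. lia.
Qed.

Lemma in_zrange a n z : In z (zrange a n) <-> a <= z < a + Z.of_nat n.
Proof.
  unfold zrange. rewrite in_map_iff. split.
  - intros [i [<- Hi]]. apply in_seq in Hi. lia.
  - intros H. exists (Z.to_nat (z - a)). split; [lia|]. apply in_seq. lia.
Qed.

Lemma nodup_prod (l : list Z) (l' : list Z) :
  NoDup l -> NoDup l' -> NoDup (list_prod l l').
Proof.
  induction l as [|a l IH]; intros Hl Hl'; simpl; [constructor|].
  inversion Hl; subst.
  apply NoDup_app.
  - apply NoDup_map_NoDup_ForallPairs; [|exact Hl'].
    intros x y _ _ E. inversion E. reflexivity.
  - apply IH; assumption.
  - intros [x y] Hin Hin2. apply in_map_iff in Hin. destruct Hin as [z [E _]].
    inversion E; subst. apply in_prod_iff in Hin2. tauto.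
Qed.

Lemma iter_left (A : cell -> Prop) y1 x :
  (forall x y, A (x, y) -> y > y1 -> A (x, y - 1)) ->
  forall n y, A (x, y) -> y1 <= y - Z.of_nat n -> A (x, y - Z.of_nat n).
Proof.
  intros H. induction n as [|n IH]; intros y Hy Hle.
  - replace (y - Z.of_nat 0) with y by lia. exact Hy.
  - replace (y - Z.of_nat (S n)) with (y - Z.of_nat n - 1) by lia.
    apply H; [apply IH; auto; lia | lia].
Qed.

Lemma iter_up (A : cell -> Prop) x1 y1 :
  (forall x, A (x, y1) -> x > x1 -> A (x - 1, y1)) ->
  forall n x, A (x, y1) -> x1 <= x - Z.of_nat n -> A (x - Z.of_nat n, y1).
Proof.
  intros H. induction n as [|n IH]; intros x Hx Hle.
  - replace (x - Z.of_nat 0) with x by lia. exact Hx.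
  - replace (x - Z.of_nat (S n)) with (x - Z.of_nat n - 1) by lia.
    apply H; [apply IH; auto; lia | lia].
Qed.

Theorem mainTheorem1 (t : nat) (A : cell -> Prop)
    (c : nat -> cell) (s : nat -> Z) (d : nat -> cell) (s' : nat -> Z) :
  (1 <= t)%nat ->
  flood t A c s (1, 0) (0, 1) ->
  flood t A d s' (-1, 0) (0, -1) ->
  exists a a' b b' : Z,
    a <= a' /\ b <= b' /\
    (forall p : cell, A p <-> (a <= fst p <= a' /\ b <= snd p <= b')) /\
    (a' - a + 1) * (b' - b + 1) = Z.of_nat t /\
    c 1%nat = (a, b) /\ d 1%nat = (a', b').
Proof.
  intros Ht Hc Hd.
  destruct (c 1%nat) as [x1 y1] eqn:Ec1.
  destruct (d 1%nat) as [x2 y2] eqn:Ed1.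
  destruct (props t A c s x1 y1 Ht Hc Ec1) as [P1 [P2 P3]].
  pose proof (flood_neg t A d s' Hd) as Hd'.
  assert (Ed1' : neg (d 1%nat) = (-x2, -y2)) by (rewrite Ed1; reflexivity).
  destruct (props t _ _ s' (-x2) (-y2) Ht Hd' Ed1') as [G1 [G2 _]].
  assert (G1' : forall p, A p -> fst p <= x2 /\ snd p <= y2).
  { intros [x y] Hp. assert (HA : A (neg (neg (x, y)))) by (rewrite neg_neg; exact Hp).
    apply G1 in HA. unfold neg in HA; simpl in *. lia. }
  assert (G2' : forall x y, A (x, y) -> y < y2 -> A (x, y + 1)).
  { intros x y Hp Hy.
    assert (HA : A (neg (-x, -y))) by (unfold neg; simpl; rewrite !Z.opp_involutive; exact Hp).
    specialize (G2 (-x) (-y) HA ltac:(lia)). unfold neg in G2; simpl in G2.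
    replace (- (- y - 1)) with (y + 1) in G2 by lia. rewrite Z.opp_involutive in G2. exact G2. }
  assert (HAd : A (x2, y2)).
  { destruct Hd as [_ [Hmem _]]. apply Hmem. exists 1%nat. split; [lia|exact Ed1]. }
  assert (HAc : A (x1, y1)).
  { destruct Hc as [_ [Hmem _]]. apply Hmem. exists 1%nat. split; [lia|exact Ec1]. }
  pose proof (P1 _ HAd) as B1. pose proof (G1' _ HAc) as B2. simpl in B1, B2.
  assert (Hbox : forall p, A p <-> (x1 <= fst p <= x2 /\ y1 <= snd p <= y2)).
  { intros [x y]. split.
    - intros Hp. pose proof (P1 _ Hp). pose proof (G1' _ Hp). simpl in *. lia.
    - simpl. intros [Hx Hy].
      assert (A (x2, y1)).
      { pose proof (iter_left A y1 x2 P2 (Z.to_nat (y2 - y1)) y2 HAd ltac:(lia)) as H.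
        replace (y2 - Z.of_nat (Z.to_nat (y2 - y1))) with y1 in H by lia. exact H. }
      assert (A (x, y1)).
      { pose proof (iter_up A x1 y1 P3 (Z.to_nat (x2 - x)) x2 H ltac:(lia)) as H'.
        replace (x2 - Z.of_nat (Z.to_nat (x2 - x))) with x in H' by lia. exact H'. }
      assert (Hr : forall n : nat, y1 + Z.of_nat n <= y2 -> A (x, y1 + Z.of_nat n)).
      { induction n as [|n IH]; intros Hn.
        - replace (y1 + Z.of_nat 0) with y1 by lia. assumption.
        - replace (y1 + Z.of_nat (S n)) with (y1 + Z.of_nat n + 1) by lia.
          apply G2'; [apply IH; lia | lia]. }
      specialize (Hr (Z.to_nat (y - y1)) ltac:(lia)).
      replace (y1 + Z.of_nat (Z.to_nat (y - y1))) with y in Hr by lia. exact Hr. }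
  exists x1, x2, y1, y2.
  split; [lia|]. split; [lia|]. split; [exact Hbox|]. split; [|split; reflexivity].
  set (n := Z.to_nat (x2 - x1 + 1)). set (m := Z.to_nat (y2 - y1 + 1)).
  set (L := map c (seq 1 t)).
  set (B := list_prod (zrange x1 n) (zrange y1 m)).
  destruct Hc as [Hinj [Hmem _]].
  assert (NL : NoDup L).
  { unfold L. apply NoDup_map_NoDup_ForallPairs; [|apply seq_NoDup].
    intros i j Hi Hj E. apply in_seq in Hi, Hj. apply Hinj; auto; lia. }
  assert (NB : NoDup B) by (apply nodup_prod; apply zrange_nodup).
  assert (HLB : forall p, In p L <-> In p B).
  { intros [x y]. unfold L, B. rewrite (in_prod_iff (zrange x1 n) (zrange y1 m) x y), in_map_iff, !in_zrange.
    transitivity (A (x, y)).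
    - rewrite Hmem. split.
      + intros [i [H1 H2]]. exists i. apply in_seq in H2. split; [lia|exact H1].
      + intros [i [H1 H2]]. exists i. split; [exact H2|]. apply in_seq. lia.
    - rewrite Hbox. simpl. unfold n, m. lia. }
  assert (E1 : (length L <= length B)%nat).
  { apply NoDup_incl_length; auto. intros p; apply HLB. }
  assert (E2 : (length B <= length L)%nat).
  { apply NoDup_incl_length; auto. intros p; apply HLB. }
  unfold L, B in E1, E2. rewrite length_map, length_seq, length_prod in E1, E2.
  unfold zrange in E1, E2. rewrite !length_map, !length_seq in E1, E2.
  assert (t = (n * m)%nat) by lia. subst t. rewrite Nat2Z.inj_mul.
  unfold n, m. rewrite !Z2Nat.id by lia. reflexivity.
Qed.
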